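(* Let $p>1$, let $\varphi:\mathbb{R}^n\to\mathbb{R}\cup\{+\infty\}$ be proper and lower semicontinuous, and let $\bar x\in\operatorname{dom}\varphi$. Then: (a) if $\bar x\in\operatorname{argmin}\varphi$, then $\bar x$ is a $p$-calm point of $\varphi$ with any constant $M>0$; (b) if $\operatorname{prox}^p_{\gamma\varphi}(\bar x)=\{\bar x\}$ (for some $\gamma>0$), then $\bar x$ is a $p$-calm point of $\varphi$ with constant $M=\frac{1}{p\gamma}$; (c) if $\bar x$ is a $p$-calm point of $\varphi$ with constant $M$, then for each $\gamma\in(0,\frac{1}{pM}]$, $\operatorname{prox}^p_{\gamma\varphi}(\bar x)=\{\bar x\}$; (d) if for some $\hat\gamma>0$, $\bar x\in\mathrm{Fix}(\operatorname{prox}^p_{\hat\gamma\varphi})$, then for each $\gamma\in(0,\hat\gamma)$, $\operatorname{prox}^p_{\gamma\varphi}(\bar x)=\{\bar x\}$, and hence $\bar x$ is a $p$-calm point of $\varphi$ with constant $M=\frac{1}{p\gamma}$; (e) if $\bar x$ is a $p$-calm point of $\varphi$, then $\varphi$ is high-order prox-bounded.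
   Context: $\operatorname{prox}^p_{\gamma\varphi}(x):=\operatorname{argmin}_{y}\big(\varphi(y)+\frac{1}{p\gamma}\|x-y\|^p\big)$; $\mathrm{Fix}(\operatorname{prox}^p_{\gamma\varphi})=\{x:x\in\operatorname{prox}^p_{\gamma\varphi}(x)\}$. A point $\bar x\in\operatorname{dom}\varphi$ is a $p$-calm point of $\varphi$ with constant $M>0$ if $\varphi(x)+M\|x-\bar x\|^p>\varphi(\bar x)$ for all $x\neq\bar x$. $\varphi$ is high-order prox-bounded (order $p$) if $\inf_y\big(\varphi(y)+\frac{1}{p\gamma}\|x-y\|^p\big)>-\infty$ for some $\gamma>0$ and $x\in\mathbb{R}^n$. *)

(* Defs.v *)
(* R^n is 'rV[R]_n (its canonical topology is the
   product topology = Euclidean topology); the norm ||.|| is the Euclidean norm. *)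
From HB Require Import structures.
From mathcomp Require Import all_boot all_order all_algebra.
From mathcomp Require Import all_classical all_reals all_analysis.
Set Implicit Arguments. Unset Strict Implicit. Unset Printing Implicit Defensive.
Import Order.TTheory GRing.Theory Num.Theory.
Import numFieldNormedType.Exports.
Local Open Scope classical_set_scope.
Local Open Scope ring_scope.

Section Defs.
Variables (R : realType) (n : nat).
Local Notation V := 'rV[R]_n.

Definition enorm (x : V) : R := Num.sqrt (\sum_(i < n) x ord0 i ^+ 2).

Definition proper_fun (phi : V -> \bar R) : Prop :=
  (forall x, phi x != -oo%E) /\ (exists x, (phi x < +oo)%E).

Definition dom (phi : V -> \bar R) : set V := [set x | (phi x < +oo)%E].

Definition argmin_fun (f : V -> \bar R) : set V :=
  [set y | forall z, (f y <= f z)%E].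

Definition prox_obj (p gamma : R) (phi : V -> \bar R) (x : V) (y : V) : \bar R :=
  (phi y + ((p * gamma)^-1 * powR (enorm (x - y)) p)%:E)%E.

Definition prox (p gamma : R) (phi : V -> \bar R) (x : V) : set V :=
  argmin_fun (prox_obj p gamma phi x).

Definition Fix_prox (p gamma : R) (phi : V -> \bar R) : set V :=
  [set x | prox p gamma phi x x].

Definition p_calm (p : R) (phi : V -> \bar R) (xbar : V) (M : R) : Prop :=
  [/\ xbar \in dom phi, 0 < M &
      forall x, x != xbar ->
        (phi xbar < phi x + (M * powR (enorm (x - xbar)) p)%:E)%E].

Definition hprox_bounded (p : R) (phi : V -> \bar R) : Prop :=
  exists gamma, exists x, 0 < gamma /\
    (-oo < ereal_inf [set prox_obj p gamma phi x y | y in [set: V]])%E.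

End Defs.

(* Main.v *)
Require Import Defs.
From HB Require Import structures.
From mathcomp Require Import all_boot all_order all_algebra.
From mathcomp Require Import all_classical all_reals all_analysis.
Import Order.TTheory GRing.Theory Num.Theory.
Import numFieldNormedType.Exports.
Local Open Scope classical_set_scope.
Local Open Scope ring_scope.

Section Aux.
Variables (R : realType) (n : nat).
Local Notation V := 'rV[R]_n.

Lemma enormN (v : V) : enorm (- v) = enorm v.
Proof. rewrite /enorm; congr Num.sqrt; apply: eq_bigr => i _; by rewrite mxE sqrrN. Qed.

Lemma enorm_sym (x y : V) : enorm (x - y) = enorm (y - x).
Proof. by rewrite -opprB enormN. Qed.

Lemma enorm0 : enorm (0 : V) = 0.
Proof. rewrite /enorm big1 ?sqrtr0 // => i _; by rewrite mxE expr2 mulr0. Qed.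

Lemma enorm_gt0 (v : V) : v != 0 -> 0 < enorm v.
Proof.
move=> v0; rewrite /enorm sqrtr_gt0 lt0r sumr_ge0 ?andbT; last first.
  by move=> i _; rewrite sqr_ge0.
apply/negP => /eqP H; move: v0 => /eqP; apply; apply/rowP => j.
have := psumr_eq0P (fun i _ => sqr_ge0 (v ord0 i)) H (i:=j) isT.
move/eqP; rewrite sqrf_eq0 => /eqP ->; by rewrite !mxE.
Qed.

Lemma pw_gt0 (p : R) (x y : V) : x != y -> 0 < powR (enorm (x - y)) p.
Proof. by move=> xy; apply: powR_gt0; apply: enorm_gt0; rewrite subr_eq0. Qed.

Lemma pw_xx (p : R) (x : V) : p != 0 -> powR (enorm (x - x)) p = 0.
Proof. by move=> p0; rewrite subrr enorm0 powR0. Qed.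

Lemma lt_aux (u w : \bar R) (a b : R) : (u < +oo)%E -> w != -oo%E ->
  (u <= w + a%:E)%E -> a < b -> (u < w + b%:E)%E.
Proof.
case: w => [r| |] //= uoo _ H ab.
apply: (le_lt_trans H); by rewrite lte_fin ltrD2l.
Qed.

End Aux.

Theorem theorem3 (R : realType) (n : nat) (p : R) (phi : 'rV[R]_n -> \bar R)
    (xbar : 'rV[R]_n) :
  1 < p -> proper_fun phi -> lower_semicontinuous phi -> xbar \in dom phi ->
  [/\ (* (a) *)
      (xbar \in argmin_fun phi -> forall M : R, 0 < M -> p_calm p phi xbar M),
      (* (b) *)
      (forall gamma : R, 0 < gamma -> prox p gamma phi xbar = [set xbar] ->
         p_calm p phi xbar (p * gamma)^-1),
      (* (c) *)
      (forall M : R, p_calm p phi xbar M ->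
         forall gamma : R, 0 < gamma -> gamma <= (p * M)^-1 ->
           prox p gamma phi xbar = [set xbar]),
      (* (d) *)
      (forall ghat : R, 0 < ghat -> xbar \in Fix_prox p ghat phi ->
         forall gamma : R, 0 < gamma -> gamma < ghat ->
           prox p gamma phi xbar = [set xbar] /\
           p_calm p phi xbar (p * gamma)^-1) &
      (* (e) *)
      ((exists M : R, p_calm p phi xbar M) -> hprox_bounded p phi)].
Proof.
move=> p1 [phiN _] _ xd.
have p0 : 0 < p by apply: lt_trans p1.
have pn0 : p != 0 by rewrite gt_eqF.
have xoo : (phi xbar < +oo)%E by move: xd; rewrite inE.
have objx : forall g, prox_obj p g phi xbar xbar = phi xbar.
  by move=> g; rewrite /prox_obj pw_xx // mulr0 adde0.
have partc : forall M : R, p_calm p phi xbar M ->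
    forall gamma : R, 0 < gamma -> gamma <= (p * M)^-1 ->
      prox p gamma phi xbar = [set xbar].
  move=> M [_ M0 cM] g g0 gle.
  have Mle : M <= (p * g)^-1.
    rewrite -[M]invrK lef_pV2 ?posrE ?invr_gt0 ?mulr_gt0 //.
    apply: (le_trans (ler_wpM2l (ltW p0) gle)); by rewrite invfM mulrA mulfV // mul1r.
  have key : forall z, z != xbar ->
      (phi xbar < prox_obj p g phi xbar z)%E.
    move=> z zx; rewrite /prox_obj; apply: (lt_le_trans (cM z zx)).
    apply: leeD2l; rewrite lee_fin enorm_sym; apply: ler_wpM2r => //.
    exact: powR_ge0.
  apply/seteqP; split => y /=.
  - move=> Hy; apply/eqP; apply/negP => /negP yx.
    have := Hy xbar; rewrite objx leNgt => /negP; apply; exact: key.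
  - move=> ->; rewrite /prox /argmin_fun /= => z; rewrite objx.
    case: (eqVneq z xbar) => [->|zx]; first by rewrite objx.
    exact/ltW/key.
split.
-
  move=> /[1!inE] amin M M0; split => // x xx.
  apply: (@lt_aux R (phi xbar) (phi x) 0) => //; first by rewrite adde0 amin.
  by rewrite mulr_gt0 // pw_gt0.
-
  move=> g g0 Hp; split => //; first by rewrite invr_gt0 mulr_gt0.
  move=> x xx.
  have xin : prox p g phi xbar xbar by rewrite Hp.
  have xnin : ~ prox p g phi xbar x by rewrite Hp => /= /eqP; apply/negP.
  have [z Hz] : exists z, ~ (prox_obj p g phi xbar x <= prox_obj p g phi xbar z)%E.
    apply: contrapT => H; apply: xnin => z; apply: contrapT => nle; apply: H; by exists z.
  move: Hz => /negP; rewrite -ltNge => Hz.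
  have := le_lt_trans (xin z) Hz; rewrite objx /prox_obj enorm_sym.
  by rewrite mulrC.
- exact: partc.
-
  move=> gh gh0 /[1!inE] Fx g g0 ggh.
  have calm : p_calm p phi xbar (p * g)^-1.
    split => //; first by rewrite invr_gt0 mulr_gt0.
    move=> x xx; apply: (@lt_aux R _ _ ((p * gh)^-1 * powR (enorm (x - xbar)) p) _ xoo (phiN x)).
      have := Fx x; rewrite objx /prox_obj enorm_sym mulrC; exact.
    rewrite ltr_pM2r; last exact: pw_gt0.
    by rewrite ltf_pV2 ?posrE ?mulr_gt0 // ltr_pM2l.
  split => //; apply: (partc _ calm) => //.
  by rewrite invfM invrK mulrA mulVf // mul1r.
-
  move=> [M [_ M0 cM]].
  exists (p * M)^-1, xbar; split; first by rewrite invr_gt0 mulr_gt0.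
  apply: (@lt_le_trans _ _ (phi xbar)).
    by rewrite ltNye.
  apply/ereal_infP => _ [y _ <-].
  case: (eqVneq y xbar) => [->|yx]; first by rewrite objx.
  rewrite /prox_obj invfM invrK mulrA mulVf // mul1r enorm_sym; exact/ltW/cM.
Qed.
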